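(* For every integer $n\ge 0$ and every complex number $x$, \[ \sum_{j=0}^{n}(-1)^jL_{n-2j}(x)=\sum_{j=0}^{n}\left(\frac{x}{2}\right)^jL_{n-j}(x)=2F_{n+1}(x). \] In particular, with Pell numbers $P_n=F_n(2)$ and Pell–Lucas numbers $Q_n=L_n(2)$, $\sum_{j=0}^n(-1)^jQ_{n-2j}=\sum_{j=0}^nQ_{n-j}=2P_{n+1}$.
   Context: The Fibonacci polynomials $F_n(x)$ and Lucas polynomials $L_n(x)$ are defined by $F_0(x)=0$, $F_1(x)=1$, $L_0(x)=2$, $L_1(x)=x$ and $G_{n+1}(x)=xG_n(x)+G_{n-1}(x)$; they are extended to negative indices by $F_{-n}(x)=(-1)^{n-1}F_n(x)$ and $L_{-n}(x)=(-1)^nL_n(x)$ (equivalently, by the Binet forms $F_n(x)=(\alpha(x)^n-\beta(x)^n)/(\alpha(x)-\beta(x))$, $L_n(x)=\alpha(x)^n+\beta(x)^n$ with $\alpha(x),\beta(x)=(x\pm\sqrt{x^2+4})/2$). *)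

(* Defs.v *)
From HB Require Import structures.
From mathcomp Require Import all_boot all_order all_algebra.
From mathcomp Require Import complex.
From mathcomp Require Import reals.
Set Implicit Arguments. Unset Strict Implicit. Unset Printing Implicit Defensive.
Import Order.TTheory GRing.Theory Num.Theory.
Local Open Scope ring_scope.

Fixpoint fibp (T : ringType) (x : T) (n : nat) : T :=
  match n with
  | 0%N => 0
  | 1%N => 1
  | (m.+1 as k).+1 => x * fibp x k + fibp x m
  end.

Fixpoint lucp (T : ringType) (x : T) (n : nat) : T :=
  match n with
  | 0%N => 2
  | 1%N => x
  | (m.+1 as k).+1 => x * lucp x k + lucp x m
  end.

(* Extension to integer indices:
   F_{-k}(x) = (-1)^(k-1) F_k(x),  L_{-k}(x) = (-1)^k L_k(x). *)
Definition fibz (T : ringType) (x : T) (z : int) : T :=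
  match z with
  | Posz n => fibp x n
  | Negz n => (-1) ^+ n * fibp x n.+1      (* z = -(n+1) *)
  end.

Definition lucz (T : ringType) (x : T) (z : int) : T :=
  match z with
  | Posz n => lucp x n
  | Negz n => (-1) ^+ n.+1 * lucp x n.+1   (* z = -(n+1) *)
  end.

(* Main.v *)
Require Import Defs.
From HB Require Import structures.
From mathcomp Require Import all_boot all_order all_algebra.
From mathcomp Require Import complex.
From mathcomp Require Import reals.
From mathcomp Require Import ring.
Import Order.TTheory GRing.Theory Num.Theory.
Local Open Scope ring_scope.

Lemma lucF (T : comRingType) (x : T) n :
  lucp x n.+1 = fibp x n.+2 + fibp x n /\ lucp x n.+2 = fibp x n.+3 + fibp x n.+1.
Proof.
elim: n => [|n [IH1 IH2]]; first by split => /=; ring.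
split => //.
have -> : lucp x n.+3 = x * lucp x n.+2 + lucp x n.+1 by [].
have -> : fibp x n.+4 = x * fibp x n.+3 + fibp x n.+2 by [].
have -> : fibp x n.+3 = x * fibp x n.+2 + fibp x n.+1 by [].
have -> : fibp x n.+2 = x * fibp x n.+1 + fibp x n by [].
rewrite IH2 IH1.
have -> : fibp x n.+3 = x * fibp x n.+2 + fibp x n.+1 by [].
have -> : fibp x n.+2 = x * fibp x n.+1 + fibp x n by [].
ring.
Qed.

Lemma lucF2 (T : comRingType) (x : T) n :
  lucp x n = 2 * fibp x n.+1 - x * fibp x n.
Proof.
case: n => [|n]; first by rewrite /=; ring.
rewrite (lucF _ x n).1.
have -> : fibp x n.+2 = x * fibp x n.+1 + fibp x n by [].
ring.
Qed.

Lemma sumB (T : comRingType) (x y : T) n : 2 * y = x ->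
  \sum_(0 <= j < n.+1) y ^+ j * lucz x (n%:Z - j%:Z) = 2 * fibz x (n.+1)%:Z.
Proof.
move=> hy.
have -> : \sum_(0 <= j < n.+1) y ^+ j * lucz x (n%:Z - j%:Z)
   = \sum_(0 <= j < n.+1) y ^+ j * lucp x (n - j)%N.
  apply: eq_big_nat => j /andP[_ hj].
  by rewrite subzn // -ltnS.
change (fibz x (n.+1)%:Z) with (fibp x n.+1).
elim: n => [|n IH]; first by rewrite big_nat1 /=; ring.
rewrite big_nat_recl // subn0.
under eq_bigr do rewrite subSS exprS -mulrA.
rewrite -big_distrr IH lucF2.
have -> : fibp x n.+2 = x * fibp x n.+1 + fibp x n by [].
move: (fibp x n.+1) (fibp x n) => F1 F0 /=.
rewrite -hy; ring.
Qed.

Lemma sumA (T : comRingType) (x : T) n :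
  \sum_(0 <= j < n.+1) (-1) ^+ j * lucz x (n%:Z - 2 * j%:Z) = 2 * fibz x (n.+1)%:Z.
Proof.
suff H : forall n, (\sum_(0 <= j < n.+1) (-1) ^+ j * lucz x (n%:Z - 2 * j%:Z) = 2 * fibz x (n.+1)%:Z)
  /\ (\sum_(0 <= j < n.+2) (-1) ^+ j * lucz x (n.+1%:Z - 2 * j%:Z) = 2 * fibz x (n.+2)%:Z).
  exact: (H n).1.
elim => [|m [IH1 IH2]].
  split; first by rewrite big_nat1 /=; ring.
  rewrite big_nat_recr // big_nat1 /=.
  rewrite expr0 expr1 /=; ring.
split => //.
rewrite big_nat_recr // big_nat_recl //.
have E : forall j : nat, (m.+2%:Z - 2 * j.+1%:Z) = (m%:Z - 2 * j%:Z).
  move=> j; rewrite -[m.+2]addn2 -[j.+1]addn1 !PoszD; ring.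
under eq_bigr do rewrite E exprS mulN1r mulNr.
rewrite sumrN IH1 expr0 mul1r mulr0 subr0.
have -> : (m.+2%:Z - 2 * m.+2%:Z = Negz m.+1)%R.
  by rewrite NegzE; ring.
change (lucz x (Negz m.+1)) with ((-1) ^+ m.+2 * lucp x m.+2).
change (lucz x m.+2) with (lucp x m.+2).
change (fibz x m.+1) with (fibp x m.+1).
change (fibz x m.+3) with (fibp x m.+3).
rewrite mulrA -exprD.
have -> : (-1 : T) ^+ (m.+2 + m.+2) = 1 by rewrite addnn -mul2n exprM sqrrN !expr1n.
rewrite mul1r (lucF _ x m.+1).1.
have -> : fibp x m.+3 = x * fibp x m.+2 + fibp x m.+1 by [].
move: (fibp x m.+2) (fibp x m.+1) => F1 F0.
rewrite /=; ring.
Qed.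

Theorem theorem9 :
  (forall (R : realType) (n : nat) (x : R[i]),
      (\sum_(0 <= j < n.+1) (-1) ^+ j * lucz x (n%:Z - 2 * j%:Z)
        = \sum_(0 <= j < n.+1) (x / 2) ^+ j * lucz x (n%:Z - j%:Z))
   /\ (\sum_(0 <= j < n.+1) (x / 2) ^+ j * lucz x (n%:Z - j%:Z)
        = 2 * fibz x (n.+1)%:Z))
  /\
  (forall n : nat,
      (\sum_(0 <= j < n.+1) (-1) ^+ j * lucz (2 : int) (n%:Z - 2 * j%:Z)
        = \sum_(0 <= j < n.+1) lucz (2 : int) (n%:Z - j%:Z))
   /\ (\sum_(0 <= j < n.+1) lucz (2 : int) (n%:Z - j%:Z)
        = 2 * fibz (2 : int) (n.+1)%:Z)).
Proof.
split.
  move=> R n x.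
  have h2 : 2 * (x / 2) = x.
    rewrite mulrC -mulrA mulVf ?mulr1 //.
    by rewrite pnatr_eq0.
  rewrite sumA sumB //.
move=> n.
have E : \sum_(0 <= j < n.+1) lucz (2 : int) (n%:Z - j%:Z)
   = \sum_(0 <= j < n.+1) 1 ^+ j * lucz (2 : int) (n%:Z - j%:Z).
  by apply: eq_bigr => j _; rewrite expr1n mul1r.
rewrite E sumA sumB //.
Qed.
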